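(* Let $V:\mathbb R\to\mathbb R$ be smooth and $\alpha_{11},\alpha_{13},\alpha_{33},\beta\in\mathbb R$. Let $u_h,v_h,w_h$ be continuously differentiable in $t$ with values in $V_h$ and satisfy, for every $j$ and all $\varphi_1,\varphi_2,\varphi_3\in V_h$, $$-\int_{I_j}\partial_tv_h\varphi_1dx-\int_{I_j}w_h\partial_x\varphi_1dx+(\widehat{w_h}\varphi_1^-)_{j+\frac12}-(\widehat{w_h}\varphi_1^+)_{j-\frac12}=-\int_{I_j}V'(u_h)\varphi_1dx,$$ $$\int_{I_j}\partial_tu_h\varphi_2dx+(\widehat{v_h}\varphi_2^-)_{j+\frac12}-(\widehat{v_h}\varphi_2^+)_{j-\frac12}=\int_{I_j}v_h\varphi_2dx,$$ $$\int_{I_j}u_h\partial_x\varphi_3dx-(\widehat{u_h}\varphi_3^-)_{j+\frac12}+(\widehat{u_h}\varphi_3^+)_{j-\frac12}=-\int_{I_j}w_h\varphi_3dx,$$ with interface fluxes $\widehat{w_h}=\{w_h\}+\alpha_{11}[u_h]+\alpha_{13}[w_h]-\beta\,\partial_t[v_h]$, $\widehat{v_h}=\beta\,\partial_t[u_h]$, $\widehat{u_h}=\{u_h\}-\alpha_{13}[u_h]-\alpha_{33}[w_h]$. Then the discrete energy $$\mathcal E_h=\int_\Omega\Big(\tfrac12(v_h^2+w_h^2)-V(u_h)\Big)dx+\tfrac12\sum_j\big(\alpha_{11}[u_h]^2-\alpha_{33}[w_h]^2\big)_{j+\frac12}$$ is constant in time.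
   Context: This is a DG discretization of the Hamiltonian wave equation $u_{tt}-u_{xx}=V'(u)$, written as $-v_t+w_x=-V'(u)$, $u_t=v$, $-u_x=-w$. Mesh and spaces: a one-dimensional domain $\Omega$ is partitioned into cells $I_j=[x_{j-1/2},x_{j+1/2}]$, $j=1,\dots,N$, with periodic boundary conditions (interface indices modulo $N$). For fixed $k\ge0$, $V_h=\{v\in L^2(\Omega): v|_{I_j}\text{ is a polynomial of degree}\le k\ \forall j\}$. For $v\in V_h$, $v^\pm_{j+1/2}$ are its right/left limits at $x_{j+1/2}$, $\{v\}=\frac12(v^++v^-)$, $[v]=v^+-v^-$; subscript $j\pm\frac12$ denotes evaluation at $x_{j\pm1/2}$. *)

(* Defs.v *)
From Stdlib Require Import Reals Lra Lia Arith.
From Coquelicot Require Import Coquelicot.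
Open Scope R_scope.

(* Mesh: nodes xs 0 < xs 1 < ... < xs N; cell j (0 <= j < N) is
   I_j = [xs j, xs (j+1)], i.e. x_{j-1/2} = xs j and x_{j+1/2} = xs (j+1)
   (cells are indexed from 0 instead of 1).  Omega = [xs 0, xs N], periodic.
   Interface m (0 <= m < N) is the right end x_{m+1/2} of cell m; by
   periodicity interface N-1 (at xs N) is identified with xs 0. *)

(* An element of V_h is given by its coefficients: c j i is the coefficient of
   x^i of the polynomial (degree <= k) on cell j. *)
Definition dgfun := nat -> nat -> R.

Definition cell_eval (k : nat) (c : dgfun) (j : nat) (x : R) : R :=
  sum_f_R0 (fun i => c j i * x ^ i) k.

(* v^-_{m+1/2} : left limit at interface m (from cell m) *)
Definition vminus (k : nat) (xs : nat -> R) (c : dgfun) (m : nat) : R :=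
  cell_eval k c m (xs (S m)).

(* v^+_{m+1/2} : right limit at interface m (from cell m+1 mod N, at its left end) *)
Definition vplus (k N : nat) (xs : nat -> R) (c : dgfun) (m : nat) : R :=
  let s := ((S m) mod N)%nat in cell_eval k c s (xs s).

Definition avg (k N : nat) (xs : nat -> R) (c : dgfun) (m : nat) : R :=
  / 2 * (vplus k N xs c m + vminus k xs c m).

Definition jump (k N : nat) (xs : nat -> R) (c : dgfun) (m : nat) : R :=
  vplus k N xs c m - vminus k xs c m.

(* index of the interface x_{j-1/2} (left end of cell j), modulo N *)
Definition left_if (N j : nat) : nat := ((j + N - 1) mod N)%nat.

Fixpoint sumN (f : nat -> R) (n : nat) : R :=
  match n with O => 0 | S n' => sumN f n' + f n' end.

Definition w_hat (k N : nat) (xs : nat -> R) (a11 a13 b : R)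
  (u v w : R -> dgfun) (t : R) (m : nat) : R :=
  avg k N xs (w t) m + a11 * jump k N xs (u t) m + a13 * jump k N xs (w t) m
  - b * Derive (fun s => jump k N xs (v s) m) t.

Definition v_hat (k N : nat) (xs : nat -> R) (b : R)
  (u : R -> dgfun) (t : R) (m : nat) : R :=
  b * Derive (fun s => jump k N xs (u s) m) t.

Definition u_hat (k N : nat) (xs : nat -> R) (a13 a33 : R)
  (u w : R -> dgfun) (t : R) (m : nat) : R :=
  avg k N xs (u t) m - a13 * jump k N xs (u t) m - a33 * jump k N xs (w t) m.

Definition C1_Vh (k N : nat) (T0 T1 : R) (u : R -> dgfun) : Prop :=
  forall j i, (j < N)%nat -> (i <= k)%nat -> forall t, T0 < t < T1 ->
    ex_derive (fun s => u s j i) t /\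
    continuous (fun s => Derive (fun s' => u s' j i) s) t.

Definition smooth (V : R -> R) : Prop := forall n x, ex_derive_n V n x.

Definition energy (k N : nat) (xs : nat -> R) (V : R -> R) (a11 a33 : R)
  (u v w : R -> dgfun) (t : R) : R :=
  sumN (fun j => RInt (fun x =>
          / 2 * ((cell_eval k (v t) j x) ^ 2 + (cell_eval k (w t) j x) ^ 2)
          - V (cell_eval k (u t) j x)) (xs j) (xs (S j))) N
  + / 2 * sumN (fun m => a11 * (jump k N xs (u t) m) ^ 2
                         - a33 * (jump k N xs (w t) m) ^ 2) N.

(* Main.v *)
Require Import Defs.
From Stdlib Require Import Reals Lra Lia Arith.
From Coquelicot Require Import Coquelicot.
Open Scope R_scope.

Lemma isd_plus (f g : R -> R) x df dg : is_derive f x df -> is_derive g x dg ->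
  is_derive (fun y => f y + g y) x (df + dg).
Proof. intros; apply (is_derive_plus f g); auto. Qed.
Lemma isd_minus (f g : R -> R) x df dg : is_derive f x df -> is_derive g x dg ->
  is_derive (fun y => f y - g y) x (df - dg).
Proof. intros; apply (is_derive_minus f g); auto. Qed.
Lemma isd_mult (f g : R -> R) x df dg : is_derive f x df -> is_derive g x dg ->
  is_derive (fun y => f y * g y) x (df * g x + f x * dg).
Proof. intros; apply (is_derive_mult f g); auto. intros; apply Rmult_comm. Qed.
Lemma isd_scal (f : R -> R) x k df : is_derive f x df ->
  is_derive (fun y => k * f y) x (k * df).
Proof. intros; apply is_derive_scal; auto. Qed.
Lemma isd_sq (f : R -> R) x df : is_derive f x df ->
  is_derive (fun y => f y ^ 2) x (2 * f x * df).
Proof. intros H. replace (2 * f x * df) with (df * f x + f x * df) by ring.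
 eapply is_derive_ext. 2: apply (isd_mult f f x df df H H).
 intros; simpl; ring. Qed.
Lemma isd_const x (a : R) : is_derive (fun _ => a) x 0.
Proof. apply (is_derive_const a x). Qed.
Lemma isd_comp (f g : R -> R) x df dg : is_derive f (g x) df -> is_derive g x dg ->
  is_derive (fun y => f (g y)) x (df * dg).
Proof. intros. rewrite Rmult_comm. apply (is_derive_comp f g); auto. Qed.
Lemma isd_id x : is_derive (fun y : R => y) x 1.
Proof. apply (is_derive_id x). Qed.
Lemma isd_eqv (f : R -> R) x l l' : l = l' -> is_derive f x l -> is_derive f x l'.
Proof. intros ->; auto. Qed.

Definition dx_eval (k : nat) (c : dgfun) (j : nat) (x : R) : R :=
  sum_f_R0 (fun i => c j i * (INR i * x ^ pred i)) k.

Lemma isd_powid n x : is_derive (fun y => y ^ n) x (INR n * x ^ pred n).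
Proof. replace (INR n * x ^ pred n) with (INR n * 1 * x ^ pred n) by ring.
  apply (is_derive_pow (fun y => y)). apply isd_id. Qed.

Lemma isd_sum (g : nat -> R -> R) (dg : nat -> R) x n :
  (forall i, (i <= n)%nat -> is_derive (g i) x (dg i)) ->
  is_derive (fun y => sum_f_R0 (fun i => g i y) n) x (sum_f_R0 dg n).
Proof. induction n; intros H; simpl. apply H; lia.
  apply isd_plus. apply IHn; intros; apply H; lia. apply H; lia. Qed.

Lemma ce_dx k c j x : is_derive (fun y => cell_eval k c j y) x (dx_eval k c j x).
Proof. unfold cell_eval, dx_eval. apply (isd_sum (fun i y => c j i * y ^ i)).
  intros; apply isd_scal, isd_powid. Qed.

Lemma ce_t k (c : R -> dgfun) dc j t x :
  (forall i, (i <= k)%nat -> is_derive (fun s => c s j i) t (dc j i)) ->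
  is_derive (fun s => cell_eval k (c s) j x) t (cell_eval k dc j x).
Proof. intros H. unfold cell_eval. apply (isd_sum (fun i s => c s j i * x ^ i)).
  intros i Hi. eapply isd_eqv. 2: apply (isd_mult _ (fun _ => x ^ i) t _ 0 (H i Hi) (isd_const _ _)).
  rewrite Rmult_0_r, Rplus_0_r; reflexivity. Qed.

Lemma isd_cpt f x l : is_derive f x l -> continuity_pt f x.
Proof. intros H. apply continuity_pt_filterlim. apply (ex_derive_continuous f x). exists l; auto. Qed.

Lemma sum_cont (g : nat -> R -> R) x n :
  (forall i, (i <= n)%nat -> continuity_pt (g i) x) ->
  continuity_pt (fun y => sum_f_R0 (fun i => g i y) n) x.
Proof. induction n; intros H; simpl. apply H; lia.
  apply (continuity_pt_plus (fun y => sum_f_R0 (fun i => g i y) n) (g (S n))).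
  apply IHn; intros; apply H; lia. apply H; lia. Qed.

Lemma dx_cont k c j x : continuity_pt (fun y => dx_eval k c j y) x.
Proof. unfold dx_eval. apply (sum_cont (fun i y => c j i * (INR i * y ^ pred i))).
  intros i _. eapply isd_cpt. apply isd_scal, isd_scal, isd_powid. Qed.

Lemma ce_cont k c j x : continuity_pt (fun y => cell_eval k c j y) x.
Proof. eapply isd_cpt, ce_dx. Qed.

Lemma sum_c2d (g : nat -> R -> R -> R) t x n :
  (forall i, (i <= n)%nat -> continuity_2d_pt (g i) t x) ->
  continuity_2d_pt (fun s y => sum_f_R0 (fun i => g i s y) n) t x.
Proof. induction n; intros H; simpl. apply H; lia.
  apply (continuity_2d_pt_plus (fun s y => sum_f_R0 (fun i => g i s y) n) (g (S n))).
  apply IHn; intros; apply H; lia. apply H; lia. Qed.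

Lemma c2d_1 (f : R -> R) t x : continuity_pt f t -> continuity_2d_pt (fun s _ => f s) t x.
Proof. intros H. apply (continuity_1d_2d_pt_comp f (fun s _ => s)). auto. apply continuity_2d_pt_id1. Qed.
Lemma c2d_2 (f : R -> R) t x : continuity_pt f x -> continuity_2d_pt (fun _ y => f y) t x.
Proof. intros H. apply (continuity_1d_2d_pt_comp f (fun _ y => y)). auto. apply continuity_2d_pt_id2. Qed.

Lemma ce_c2d k (c : R -> dgfun) j t x :
  (forall i, (i <= k)%nat -> continuity_pt (fun s => c s j i) t) ->
  continuity_2d_pt (fun s y => cell_eval k (c s) j y) t x.
Proof. intros H. unfold cell_eval. apply (sum_c2d (fun i s y => c s j i * y ^ i)).
  intros i Hi. apply (continuity_2d_pt_mult (fun s _ => c s j i) (fun _ y => y ^ i)).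
  apply c2d_1; auto. apply c2d_2. eapply isd_cpt, isd_powid. Qed.

Lemma c2d_cont f t x : continuity_2d_pt f t x -> continuous (fun y => f t y) x.
Proof. intros H. apply continuity_pt_filterlim. intros e He.
  destruct (H (mkposreal e He)) as [d Hd]. exists d. split. apply cond_pos.
  intros y [_ Hy]. simpl in *. unfold R_dist in *. apply Hd. rewrite Rminus_eq_0, Rabs_R0. apply cond_pos. auto. Qed.

Lemma param (f df : R -> R -> R) a b t0 (d : posreal) :
  (forall t x, Rabs (t - t0) < d -> is_derive (fun s => f s x) t (df t x)) ->
  (forall t x, Rabs (t - t0) < d -> continuity_2d_pt f t x) ->
  (forall x, continuity_2d_pt df t0 x) ->
  is_derive (fun t => RInt (f t) a b) t0 (RInt (df t0) a b).
Proof.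
  intros Hd Hc Hdc.
  assert (E : RInt (df t0) a b = RInt (fun x => Derive (fun u => f u x) t0) a b).
  { apply RInt_ext. intros x _. symmetry. apply is_derive_unique. apply Hd.
    rewrite Rminus_eq_0, Rabs_R0; apply cond_pos. }
  rewrite E. apply (is_derive_RInt_param f a b t0).
  - exists d. intros y Hy x _. exists (df y x). apply Hd. exact Hy.
  - intros x _. apply continuity_2d_pt_ext_loc with df; auto.
    exists d. intros u v Hu _. symmetry. apply is_derive_unique. apply Hd; auto.
  - exists d. intros y Hy. apply (@ex_RInt_continuous R_CompleteNormedModule). intros z _.
    apply c2d_cont. apply Hc. exact Hy.
Qed.

Lemma sumN_ext f g n : (forall j, (j < n)%nat -> f j = g j) -> sumN f n = sumN g n.
Proof. induction n; intros H; simpl; auto. rewrite IHn, H; auto; intros; apply H; lia. Qed.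
Lemma sumN_minus f g n : sumN (fun j => f j - g j) n = sumN f n - sumN g n.
Proof. induction n; simpl. ring. rewrite IHn; ring. Qed.
Lemma sumN_plus f g n : sumN (fun j => f j + g j) n = sumN f n + sumN g n.
Proof. induction n; simpl. ring. rewrite IHn; ring. Qed.
Lemma sumN_scal c f n : sumN (fun j => c * f j) n = c * sumN f n.
Proof. induction n; simpl. ring. rewrite IHn; ring. Qed.
Lemma sumN_S f n : sumN f (S n) = f O + sumN (fun j => f (S j)) n.
Proof. induction n. simpl; ring. change (sumN f (S (S n))) with (sumN f (S n) + f (S n)).
  rewrite IHn. simpl. ring. Qed.

Lemma left_if_S n j : (j < n)%nat -> left_if (S n) (S j) = j.
Proof. intros H. unfold left_if. replace (S j + S n - 1)%nat with (j + 1 * S n)%nat by lia.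
  rewrite Nat.Div0.mod_add. apply Nat.mod_small; lia. Qed.
Lemma left_if_0 n : left_if (S n) 0 = n.
Proof. unfold left_if. replace (0 + S n - 1)%nat with n by lia. apply Nat.mod_small; lia. Qed.
Lemma left_if_lt N j : (1 <= N)%nat -> (left_if N j < N)%nat.
Proof. intros; unfold left_if; apply Nat.mod_upper_bound; lia. Qed.
Lemma S_left_if N j : (j < N)%nat -> ((S (left_if N j)) mod N = j)%nat.
Proof. intros H. destruct N as [|n]. lia. destruct j as [|j].
  rewrite left_if_0. apply Nat.Div0.mod_same.
  rewrite left_if_S by lia. apply Nat.mod_small; lia. Qed.

Lemma sumN_shift g N : (1 <= N)%nat -> sumN (fun j => g (left_if N j)) N = sumN g N.
Proof. intros H. destruct N as [|n]. lia.
  rewrite sumN_S, left_if_0. simpl.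
  rewrite (sumN_ext (fun j => g (left_if (S n) (S j))) g). ring.
  intros; rewrite left_if_S; auto. Qed.

Lemma vplus_l k N xs c j : (j < N)%nat -> vplus k N xs c (left_if N j) = cell_eval k c j (xs j).
Proof. intros H. unfold vplus. rewrite S_left_if; auto. Qed.

Lemma isd_sumN (f : R -> nat -> R) df t n :
  (forall j, (j < n)%nat -> is_derive (fun s => f s j) t (df j)) ->
  is_derive (fun s => sumN (f s) n) t (sumN df n).
Proof. induction n; intros H; simpl. apply isd_const.
  apply isd_plus. apply IHn; intros; apply H; lia. apply H; lia. Qed.

Definition Dt (c : R -> dgfun) (t : R) : dgfun := fun j i => Derive (fun s => c s j i) t.

Section S.
Variables (k N : nat) (xs : nat -> R) (T0 T1 : R) (c : R -> dgfun).
Hypothesis HN : (1 <= N)%nat.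
Hypothesis HC : C1_Vh k N T0 T1 c.

Lemma ceD j t x : (j < N)%nat -> T0 < t < T1 ->
  is_derive (fun s => cell_eval k (c s) j x) t (cell_eval k (Dt c t) j x).
Proof. intros Hj Ht. apply ce_t. intros i Hi. apply Derive_correct. apply (HC j i Hj Hi t Ht). Qed.

Lemma ce_c2 j t x : (j < N)%nat -> T0 < t < T1 ->
  continuity_2d_pt (fun s y => cell_eval k (c s) j y) t x.
Proof. intros Hj Ht. apply ce_c2d. intros i Hi. apply continuity_pt_filterlim.
  apply (ex_derive_continuous (fun s => c s j i)). apply (HC j i Hj Hi t Ht). Qed.

Lemma ceD_c2 j t x : (j < N)%nat -> T0 < t < T1 ->
  continuity_2d_pt (fun s y => cell_eval k (Dt c s) j y) t x.
Proof. intros Hj Ht. apply (ce_c2d k (Dt c)). intros i Hi. apply continuity_pt_filterlim.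
  apply (HC j i Hj Hi t Ht). Qed.

Lemma vm_D m t : (m < N)%nat -> T0 < t < T1 ->
  is_derive (fun s => vminus k xs (c s) m) t (vminus k xs (Dt c t) m).
Proof. intros; unfold vminus; apply ceD; auto. Qed.

Lemma vp_D m t : T0 < t < T1 ->
  is_derive (fun s => vplus k N xs (c s) m) t (vplus k N xs (Dt c t) m).
Proof. intros; unfold vplus; apply ceD; auto. apply Nat.mod_upper_bound; lia. Qed.

Lemma jump_D m t : (m < N)%nat -> T0 < t < T1 ->
  is_derive (fun s => jump k N xs (c s) m) t (jump k N xs (Dt c t) m).
Proof. intros; unfold jump; apply isd_minus; [apply vp_D | apply vm_D]; auto. Qed.

Lemma avg_D m t : (m < N)%nat -> T0 < t < T1 ->
  is_derive (fun s => avg k N xs (c s) m) t (avg k N xs (Dt c t) m).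
Proof. intros; unfold avg; apply isd_scal, isd_plus; [apply vp_D | apply vm_D]; auto. Qed.

Lemma Derive_jump m t : (m < N)%nat -> T0 < t < T1 ->
  Derive (fun s => jump k N xs (c s) m) t = jump k N xs (Dt c t) m.
Proof. intros; apply is_derive_unique, jump_D; auto. Qed.

Lemma Derive_ce j t x : (j < N)%nat -> T0 < t < T1 ->
  Derive (fun s => cell_eval k (c s) j x) t = cell_eval k (Dt c t) j x.
Proof. intros; apply is_derive_unique, ceD; auto. Qed.
End S.

Lemma Derive_dx k c j x : Derive (fun y => cell_eval k c j y) x = dx_eval k c j x.
Proof. apply is_derive_unique, ce_dx. Qed.

Lemma exR (f : R -> R) a b : (forall x, continuity_pt f x) -> ex_RInt f a b.
Proof. intros H. apply (@ex_RInt_continuous R_CompleteNormedModule). intros z _.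
  apply continuity_pt_filterlim, H. Qed.

Lemma ibp k (W U : dgfun) j a b :
  RInt (fun x => cell_eval k W j x * Derive (fun y => cell_eval k U j y) x) a b
  + RInt (fun x => cell_eval k U j x * Derive (fun y => cell_eval k W j y) x) a b
  = cell_eval k W j b * cell_eval k U j b - cell_eval k W j a * cell_eval k U j a.
Proof.
  transitivity (RInt (fun x => cell_eval k W j x * Derive (fun y => cell_eval k U j y) x
     + cell_eval k U j x * Derive (fun y => cell_eval k W j y) x) a b).
  symmetry. apply (RInt_plus (V := R_CompleteNormedModule)
    (fun x => cell_eval k W j x * Derive (fun y => cell_eval k U j y) x)
    (fun x => cell_eval k U j x * Derive (fun y => cell_eval k W j y) x)).
  1,2: apply exR; intros x; apply continuity_pt_mult; [apply ce_cont|];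
       eapply continuity_pt_ext; [intros y; symmetry; apply Derive_dx| apply dx_cont].
  apply is_RInt_unique.
  apply (is_RInt_derive (fun x => cell_eval k W j x * cell_eval k U j x)).
  - intros x _. eapply isd_eqv. 2: apply isd_mult; apply ce_dx.
    simpl. rewrite !Derive_dx. unfold plus; simpl. ring.
  - intros x _. apply continuity_pt_filterlim.
    apply continuity_pt_ext with (fun y => cell_eval k W j y * dx_eval k U j y + cell_eval k U j y * dx_eval k W j y).
    intros y. rewrite !Derive_dx. reflexivity.
    apply (continuity_pt_plus (fun y => cell_eval k W j y * dx_eval k U j y)
                              (fun y => cell_eval k U j y * dx_eval k W j y));
    apply continuity_pt_mult; try apply ce_cont; apply dx_cont.
Qed.

Lemma near_pos T0 T1 t0 : T0 < t0 < T1 ->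
  exists d : posreal, forall t, Rabs (t - t0) < d -> T0 < t < T1.
Proof. intros H. assert (P : 0 < Rmin (t0 - T0) (T1 - t0)) by (apply Rmin_glb_lt; lra).
  exists (mkposreal _ P). simpl. intros t Ht. apply Rabs_def2 in Ht.
  pose proof (Rmin_l (t0 - T0) (T1 - t0)). pose proof (Rmin_r (t0 - T0) (T1 - t0)). lra. Qed.

Lemma smooth_cont V x : smooth V -> continuity_pt V x.
Proof. intros H. apply continuity_pt_filterlim. apply (ex_derive_continuous V). apply (H 1%nat x). Qed.
Lemma smooth_dcont V x : smooth V -> continuity_pt (Derive V) x.
Proof. intros H. apply continuity_pt_filterlim. apply (ex_derive_continuous (Derive V)). apply (H 2%nat x). Qed.

Lemma sq2d (f : R -> R -> R) t x : continuity_2d_pt f t x -> continuity_2d_pt (fun s y => f s y ^ 2) t x.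
Proof. intros H. apply continuity_2d_pt_ext with (fun s y => f s y * f s y).
  intros; ring. apply continuity_2d_pt_mult; auto. Qed.

Lemma energy_D V a11 a33 k N xs T0 T1 u v w t0 :
  smooth V -> (1 <= N)%nat -> C1_Vh k N T0 T1 u -> C1_Vh k N T0 T1 v -> C1_Vh k N T0 T1 w ->
  T0 < t0 < T1 ->
  is_derive (energy k N xs V a11 a33 u v w) t0
   (sumN (fun j => RInt (fun x =>
       cell_eval k (v t0) j x * cell_eval k (Dt v t0) j x
       + cell_eval k (w t0) j x * cell_eval k (Dt w t0) j x
       - Derive V (cell_eval k (u t0) j x) * cell_eval k (Dt u t0) j x) (xs j) (xs (S j))) N
    + / 2 * sumN (fun m => a11 * (2 * jump k N xs (u t0) m * jump k N xs (Dt u t0) m)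
                         - a33 * (2 * jump k N xs (w t0) m * jump k N xs (Dt w t0) m)) N).
Proof.
  intros HV HN Hu Hv Hw Ht0. destruct (near_pos _ _ _ Ht0) as [d Hd].
  unfold energy. apply isd_plus.
  - apply (isd_sumN (fun t j => RInt (fun x =>
          / 2 * ((cell_eval k (v t) j x) ^ 2 + (cell_eval k (w t) j x) ^ 2)
          - V (cell_eval k (u t) j x)) (xs j) (xs (S j)))).
    intros j Hj.
    apply (param (fun t x => / 2 * ((cell_eval k (v t) j x) ^ 2 + (cell_eval k (w t) j x) ^ 2)
          - V (cell_eval k (u t) j x))
          (fun t x => cell_eval k (v t) j x * cell_eval k (Dt v t) j x
       + cell_eval k (w t) j x * cell_eval k (Dt w t) j x
       - Derive V (cell_eval k (u t) j x) * cell_eval k (Dt u t) j x) _ _ t0 d).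
    + intros t x Ht. apply Hd in Ht.
      eapply isd_eqv. 2: apply isd_minus. 2: apply isd_scal, isd_plus; apply isd_sq; apply (ceD k N T0 T1); auto.
      2: apply isd_comp. 2: apply Derive_correct, (HV 1%nat). 2: apply (ceD k N T0 T1); auto.
      simpl. field.
    + intros t x Ht. apply Hd in Ht.
      apply continuity_2d_pt_minus. apply continuity_2d_pt_mult. apply continuity_2d_pt_const.
      apply continuity_2d_pt_plus; apply sq2d; apply (ce_c2 k N T0 T1); auto.
      apply (continuity_1d_2d_pt_comp V (fun s y => cell_eval k (u s) j y)).
      apply smooth_cont; auto. apply (ce_c2 k N T0 T1); auto.
    + intros x.
      apply continuity_2d_pt_minus. apply continuity_2d_pt_plus; apply continuity_2d_pt_mult.
      1,3: apply (ce_c2 k N T0 T1); auto.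
      1,2: apply (ceD_c2 k N T0 T1); auto.
      apply continuity_2d_pt_mult. 2: apply (ceD_c2 k N T0 T1); auto.
      apply (continuity_1d_2d_pt_comp (Derive V) (fun s y => cell_eval k (u s) j y)).
      apply smooth_dcont; auto. apply (ce_c2 k N T0 T1); auto.
  - apply isd_scal.
    apply (isd_sumN (fun t m => a11 * (jump k N xs (u t) m) ^ 2
                         - a33 * (jump k N xs (w t) m) ^ 2)).
    intros m Hm. apply isd_minus; apply isd_scal; apply isd_sq; apply (jump_D k N xs T0 T1); auto.
Qed.

Lemma isd_mulc (f : R -> R) x df c : is_derive f x df -> is_derive (fun y => f y * c) x (df * c).
Proof. intros H. eapply isd_eqv. 2: apply (isd_mult f (fun _ => c) x df 0 H (isd_const _ _)). simpl; ring. Qed.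

Lemma uhat_D k N xs T0 T1 a13 a33 u w m t : (1 <= N)%nat -> C1_Vh k N T0 T1 u -> C1_Vh k N T0 T1 w ->
  (m < N)%nat -> T0 < t < T1 ->
  is_derive (fun s => u_hat k N xs a13 a33 u w s m) t
    (u_hat k N xs a13 a33 (fun _ => Dt u t) (fun _ => Dt w t) t m).
Proof. intros. unfold u_hat. apply isd_minus. apply isd_minus.
  apply (avg_D k N xs T0 T1); auto. apply isd_scal, (jump_D k N xs T0 T1); auto.
  apply isd_scal, (jump_D k N xs T0 T1); auto. Qed.

Lemma g_cont k (c : dgfun) j x : continuity_pt (fun y => Derive (fun z => cell_eval k c j z) y) x.
Proof. apply continuity_pt_ext with (dx_eval k c j). intros; symmetry; apply Derive_dx. apply dx_cont. Qed.

Lemma E3_D k N xs T0 T1 a13 a33 u w t0 j : (1 <= N)%nat -> C1_Vh k N T0 T1 u -> C1_Vh k N T0 T1 w ->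
  (forall t, T0 < t < T1 -> forall j, (j < N)%nat -> forall phi3 : dgfun,
     RInt (fun x => cell_eval k (u t) j x
                    * Derive (fun y => cell_eval k phi3 j y) x) (xs j) (xs (S j))
     - u_hat k N xs a13 a33 u w t j * cell_eval k phi3 j (xs (S j))
     + u_hat k N xs a13 a33 u w t (left_if N j) * cell_eval k phi3 j (xs j)
     = - RInt (fun x => cell_eval k (w t) j x * cell_eval k phi3 j x)
              (xs j) (xs (S j))) ->
  T0 < t0 < T1 -> (j < N)%nat ->
  RInt (fun x => cell_eval k (Dt u t0) j x * Derive (fun y => cell_eval k (w t0) j y) x) (xs j) (xs (S j))
  - u_hat k N xs a13 a33 (fun _ => Dt u t0) (fun _ => Dt w t0) t0 j * cell_eval k (w t0) j (xs (S j))
  + u_hat k N xs a13 a33 (fun _ => Dt u t0) (fun _ => Dt w t0) t0 (left_if N j) * cell_eval k (w t0) j (xs j)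
  + RInt (fun x => cell_eval k (Dt w t0) j x * cell_eval k (w t0) j x) (xs j) (xs (S j)) = 0.
Proof.
  intros HN Hu Hw E3 Ht0 Hj. destruct (near_pos _ _ _ Ht0) as [d Hd].
  set (p := w t0).
  set (H := fun t => RInt (fun x => cell_eval k (u t) j x * Derive (fun y => cell_eval k p j y) x) (xs j) (xs (S j))
     - u_hat k N xs a13 a33 u w t j * cell_eval k p j (xs (S j))
     + u_hat k N xs a13 a33 u w t (left_if N j) * cell_eval k p j (xs j)
     + RInt (fun x => cell_eval k (w t) j x * cell_eval k p j x) (xs j) (xs (S j))).
  assert (HL : forall x, Rabs (x - t0) < d -> cell_eval k (Dt u x) j x = cell_eval k (Dt u x) j x) by auto.
  assert (Hd1 : is_derive H t0
   (RInt (fun x => cell_eval k (Dt u t0) j x * Derive (fun y => cell_eval k p j y) x) (xs j) (xs (S j))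
  - u_hat k N xs a13 a33 (fun _ => Dt u t0) (fun _ => Dt w t0) t0 j * cell_eval k p j (xs (S j))
  + u_hat k N xs a13 a33 (fun _ => Dt u t0) (fun _ => Dt w t0) t0 (left_if N j) * cell_eval k p j (xs j)
  + RInt (fun x => cell_eval k (Dt w t0) j x * cell_eval k p j x) (xs j) (xs (S j)))).
  { unfold H. apply isd_plus. apply isd_plus. apply isd_minus.
    - apply (param (fun t x => cell_eval k (u t) j x * Derive (fun y => cell_eval k p j y) x)
                   (fun t x => cell_eval k (Dt u t) j x * Derive (fun y => cell_eval k p j y) x) _ _ t0 d).
      + intros t x Ht. apply Hd in Ht. apply isd_mulc. apply (ceD k N T0 T1); auto.
      + intros t x Ht. apply Hd in Ht. apply continuity_2d_pt_mult.
        apply (ce_c2 k N T0 T1); auto. apply c2d_2, g_cont.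
      + intros x. apply continuity_2d_pt_mult.
        apply (ceD_c2 k N T0 T1); auto. apply c2d_2, g_cont.
    - apply isd_mulc. apply uhat_D with T0 T1; auto.
    - apply isd_mulc. apply uhat_D with T0 T1; auto. apply left_if_lt; auto.
    - apply (param (fun t x => cell_eval k (w t) j x * cell_eval k p j x)
                   (fun t x => cell_eval k (Dt w t) j x * cell_eval k p j x) _ _ t0 d).
      + intros t x Ht. apply Hd in Ht. apply isd_mulc. apply (ceD k N T0 T1); auto.
      + intros t x Ht. apply Hd in Ht. apply continuity_2d_pt_mult.
        apply (ce_c2 k N T0 T1); auto. apply c2d_2, ce_cont.
      + intros x. apply continuity_2d_pt_mult.
        apply (ceD_c2 k N T0 T1); auto. apply c2d_2, ce_cont. }
  assert (Hz : is_derive H t0 0).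
  { apply is_derive_ext_loc with (fun _ => 0). 2: apply isd_const.
    exists d. intros y Hy. apply Hd in Hy. change (0 = H y). unfold H. rewrite (E3 y Hy j Hj p). ring. }
  apply is_derive_unique in Hd1. apply is_derive_unique in Hz. rewrite <- Hd1. exact Hz.
Qed.

Definition flux_terms k N xs a11 a13 a33 b (u v w : R -> dgfun) t0 (val : dgfun -> nat -> R) m :=
  (b * jump k N xs (Dt u t0) m) * val (Dt v t0) m
  + u_hat k N xs a13 a33 (fun _ => Dt u t0) (fun _ => Dt w t0) t0 m * val (w t0) m
  + (avg k N xs (w t0) m + a11 * jump k N xs (u t0) m + a13 * jump k N xs (w t0) m
     - b * jump k N xs (Dt v t0) m) * val (Dt u t0) m
  - val (w t0) m * val (Dt u t0) m.

Lemma cc k (c d : dgfun) j x : continuity_pt (fun y => cell_eval k c j y * cell_eval k d j y) x.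
Proof. apply continuity_pt_mult; apply ce_cont. Qed.

Lemma cell V a11 a13 a33 b k N xs T0 T1 u v w t0 j :
  smooth V -> (1 <= N)%nat ->
  C1_Vh k N T0 T1 u -> C1_Vh k N T0 T1 v -> C1_Vh k N T0 T1 w ->
  (forall t, T0 < t < T1 -> forall j, (j < N)%nat -> forall phi1 : dgfun,
     - RInt (fun x => Derive (fun s => cell_eval k (v s) j x) t
                      * cell_eval k phi1 j x) (xs j) (xs (S j))
     - RInt (fun x => cell_eval k (w t) j x
                      * Derive (fun y => cell_eval k phi1 j y) x) (xs j) (xs (S j))
     + w_hat k N xs a11 a13 b u v w t j * cell_eval k phi1 j (xs (S j))
     - w_hat k N xs a11 a13 b u v w t (left_if N j) * cell_eval k phi1 j (xs j)
     = - RInt (fun x => Derive V (cell_eval k (u t) j x)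
                        * cell_eval k phi1 j x) (xs j) (xs (S j))) ->
  (forall t, T0 < t < T1 -> forall j, (j < N)%nat -> forall phi2 : dgfun,
     RInt (fun x => Derive (fun s => cell_eval k (u s) j x) t
                    * cell_eval k phi2 j x) (xs j) (xs (S j))
     + v_hat k N xs b u t j * cell_eval k phi2 j (xs (S j))
     - v_hat k N xs b u t (left_if N j) * cell_eval k phi2 j (xs j)
     = RInt (fun x => cell_eval k (v t) j x * cell_eval k phi2 j x)
            (xs j) (xs (S j))) ->
  (forall t, T0 < t < T1 -> forall j, (j < N)%nat -> forall phi3 : dgfun,
     RInt (fun x => cell_eval k (u t) j x
                    * Derive (fun y => cell_eval k phi3 j y) x) (xs j) (xs (S j))
     - u_hat k N xs a13 a33 u w t j * cell_eval k phi3 j (xs (S j))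
     + u_hat k N xs a13 a33 u w t (left_if N j) * cell_eval k phi3 j (xs j)
     = - RInt (fun x => cell_eval k (w t) j x * cell_eval k phi3 j x)
              (xs j) (xs (S j))) ->
  T0 < t0 < T1 -> (j < N)%nat ->
  RInt (fun x =>
       cell_eval k (v t0) j x * cell_eval k (Dt v t0) j x
       + cell_eval k (w t0) j x * cell_eval k (Dt w t0) j x
       - Derive V (cell_eval k (u t0) j x) * cell_eval k (Dt u t0) j x) (xs j) (xs (S j))
  = flux_terms k N xs a11 a13 a33 b u v w t0 (vminus k xs) j
    - flux_terms k N xs a11 a13 a33 b u v w t0 (vplus k N xs) (left_if N j).
Proof.
  intros HV HN Hu Hv Hw E1 E2 E3 Ht0 Hj.
  assert (Hl : (left_if N j < N)%nat) by (apply left_if_lt; auto).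
  pose proof (E1 t0 Ht0 j Hj (Dt u t0)) as e1.
  pose proof (E2 t0 Ht0 j Hj (Dt v t0)) as e2.
  pose proof (E3_D k N xs T0 T1 a13 a33 u w t0 j HN Hu Hw E3 Ht0 Hj) as e3.
  pose proof (ibp k (w t0) (Dt u t0) j (xs j) (xs (S j))) as e4.
  unfold w_hat in e1. unfold v_hat in e2.
  rewrite !(Derive_jump k N xs T0 T1 v) in e1 by auto.
  rewrite !(Derive_jump k N xs T0 T1 u) in e2 by auto.
  rewrite (RInt_ext (V := R_CompleteNormedModule) (fun x => Derive (fun s => cell_eval k (v s) j x) t0 * cell_eval k (Dt u t0) j x)
     (fun x => cell_eval k (Dt u t0) j x * cell_eval k (Dt v t0) j x)) in e1.
  2:{ intros x _. rewrite (Derive_ce k N T0 T1 v) by auto. apply Rmult_comm. }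
  rewrite (RInt_ext (V := R_CompleteNormedModule) (fun x => Derive (fun s => cell_eval k (u s) j x) t0 * cell_eval k (Dt v t0) j x)
     (fun x => cell_eval k (Dt u t0) j x * cell_eval k (Dt v t0) j x)) in e2.
  2:{ intros x _. rewrite (Derive_ce k N T0 T1 u) by auto. reflexivity. }
  rewrite (RInt_ext (V := R_CompleteNormedModule) (fun x => cell_eval k (Dt w t0) j x * cell_eval k (w t0) j x)
     (fun x => cell_eval k (w t0) j x * cell_eval k (Dt w t0) j x)) in e3.
  2:{ intros x _. apply Rmult_comm. }
  assert (Hs : forall f g h : R -> R, (forall x, continuity_pt f x) -> (forall x, continuity_pt g x) ->
     (forall x, continuity_pt h x) ->
     RInt (fun x => f x + g x - h x) (xs j) (xs (S j)) =
     RInt f (xs j) (xs (S j)) + RInt g (xs j) (xs (S j)) - RInt h (xs j) (xs (S j))).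
  { intros f g h Hf Hg Hh.
    rewrite (RInt_minus (V := R_CompleteNormedModule) (fun x => f x + g x) h).
    rewrite (RInt_plus (V := R_CompleteNormedModule) f g). reflexivity.
    1,2: apply exR; auto. 2: apply exR; auto.
    apply exR. intros x. apply continuity_pt_plus; auto. }
  rewrite (Hs (fun x => cell_eval k (v t0) j x * cell_eval k (Dt v t0) j x)
              (fun x => cell_eval k (w t0) j x * cell_eval k (Dt w t0) j x)
              (fun x => Derive V (cell_eval k (u t0) j x) * cell_eval k (Dt u t0) j x)).
  2,3: intros; apply cc.
  2:{ intros x. apply continuity_pt_mult. 2: apply ce_cont.
      apply (continuity_pt_comp (fun y => cell_eval k (u t0) j y) (Derive V)).
      apply ce_cont. apply smooth_dcont; auto. }
  unfold flux_terms. rewrite !vplus_l by auto. unfold vminus.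
  lra.
Qed.

Lemma sumN_0 n : sumN (fun _ => 0) n = 0.
Proof. induction n; simpl; auto. rewrite IHn; ring. Qed.

Theorem proposition4p1
  (V : R -> R) (a11 a13 a33 b : R) (k N : nat) (xs : nat -> R)
  (T0 T1 : R) (u v w : R -> dgfun) :
  smooth V ->
  (1 <= N)%nat ->
  (forall j, (j < N)%nat -> xs j < xs (S j)) ->
  C1_Vh k N T0 T1 u -> C1_Vh k N T0 T1 v -> C1_Vh k N T0 T1 w ->
  (forall t, T0 < t < T1 -> forall j, (j < N)%nat -> forall phi1 : dgfun,
     - RInt (fun x => Derive (fun s => cell_eval k (v s) j x) t
                      * cell_eval k phi1 j x) (xs j) (xs (S j))
     - RInt (fun x => cell_eval k (w t) j x
                      * Derive (fun y => cell_eval k phi1 j y) x) (xs j) (xs (S j))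
     + w_hat k N xs a11 a13 b u v w t j * cell_eval k phi1 j (xs (S j))
     - w_hat k N xs a11 a13 b u v w t (left_if N j) * cell_eval k phi1 j (xs j)
     = - RInt (fun x => Derive V (cell_eval k (u t) j x)
                        * cell_eval k phi1 j x) (xs j) (xs (S j))) ->
  (forall t, T0 < t < T1 -> forall j, (j < N)%nat -> forall phi2 : dgfun,
     RInt (fun x => Derive (fun s => cell_eval k (u s) j x) t
                    * cell_eval k phi2 j x) (xs j) (xs (S j))
     + v_hat k N xs b u t j * cell_eval k phi2 j (xs (S j))
     - v_hat k N xs b u t (left_if N j) * cell_eval k phi2 j (xs j)
     = RInt (fun x => cell_eval k (v t) j x * cell_eval k phi2 j x)
            (xs j) (xs (S j))) ->
  (forall t, T0 < t < T1 -> forall j, (j < N)%nat -> forall phi3 : dgfun,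
     RInt (fun x => cell_eval k (u t) j x
                    * Derive (fun y => cell_eval k phi3 j y) x) (xs j) (xs (S j))
     - u_hat k N xs a13 a33 u w t j * cell_eval k phi3 j (xs (S j))
     + u_hat k N xs a13 a33 u w t (left_if N j) * cell_eval k phi3 j (xs j)
     = - RInt (fun x => cell_eval k (w t) j x * cell_eval k phi3 j x)
              (xs j) (xs (S j))) ->
  forall t1 t2, T0 < t1 < T1 -> T0 < t2 < T1 ->
    energy k N xs V a11 a33 u v w t1 = energy k N xs V a11 a33 u v w t2.
Proof.
  intros HV HN Hxs Hu Hv Hw E1 E2 E3 t1 t2 Ht1 Ht2.
  assert (Hder : forall t0, T0 < t0 < T1 -> is_derive (energy k N xs V a11 a33 u v w) t0 0).
  { intros t0 Ht0. eapply isd_eqv. 2: apply (energy_D V a11 a33 k N xs T0 T1 u v w t0); auto.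
    rewrite (sumN_ext _ (fun j => flux_terms k N xs a11 a13 a33 b u v w t0 (vminus k xs) j
           - flux_terms k N xs a11 a13 a33 b u v w t0 (vplus k N xs) (left_if N j))).
    2:{ intros j Hj. apply (cell V a11 a13 a33 b k N xs T0 T1 u v w t0 j); auto. }
    rewrite sumN_minus, (sumN_shift (flux_terms k N xs a11 a13 a33 b u v w t0 (vplus k N xs))) by auto.
    rewrite <- sumN_minus, <- sumN_scal, <- sumN_plus.
    rewrite <- (sumN_0 N). apply sumN_ext. intros m _.
    unfold flux_terms, u_hat, avg, jump. field. }
  destruct (MVT_gen (energy k N xs V a11 a33 u v w) t1 t2 (fun _ => 0)) as [c [_ Hc]].
  - intros x Hx. apply Hder. split.
    + apply Rlt_le_trans with (Rmin t1 t2). apply Rmin_glb_lt; lra. lra.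
    + apply Rle_lt_trans with (Rmax t1 t2). lra. apply Rmax_lub_lt; lra.
  - intros x Hx. eapply isd_cpt. apply Hder. split.
    + apply Rlt_le_trans with (Rmin t1 t2). apply Rmin_glb_lt; lra. lra.
    + apply Rle_lt_trans with (Rmax t1 t2). lra. apply Rmax_lub_lt; lra.
  - lra.
Qed.
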